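(* Let $\phi=\phi_{\mathrm{NH}}$, $\phi_{\mathrm{NH}}(y,t)=t^{-1/2}\exp(y^2/(2t))$, and $\Phi(\boldsymbol x,t)=\sum_{i=1}^N\phi(x_i,t)$. Let $B>0$, $\boldsymbol x\in[0,\infty)^N$, $t>0$, $\boldsymbol p\in\Delta^{N-1}$ with $p_i\propto\partial_x\phi(x_i,t)$ (arbitrary if all these vanish), $\boldsymbol\ell\in\mathbb{R}^N$ with $\max_{i,i'}|\ell_i-\ell_{i'}|\le B$, $\Delta x_i=\langle\boldsymbol p,\boldsymbol\ell\rangle-\ell_i$, and let $\Delta t\ge0$ be such that $\Phi(\boldsymbol x+\Delta\boldsymbol x,t+\Delta t)=\Phi(\boldsymbol x,t)$. If $K>0$ is such that $\max_{i\in[N]}x_i^2/t\le K$, then $$t\ge256e^2B^2\max\{K,1\}\implies\Delta t\le2eB^2.$$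
   Context: $\Delta^{N-1}$ is the probability simplex in $\mathbb{R}^N$. *)

(* Defs.v *)
From HB Require Import structures.
From mathcomp Require Import all_boot all_order all_algebra.
From mathcomp Require Import all_classical all_reals all_analysis.
Set Implicit Arguments. Unset Strict Implicit. Unset Printing Implicit Defensive.
Import Order.TTheory GRing.Theory Num.Theory.
Local Open Scope ring_scope.

Definition phiNH (R : realType) (y t : R) : R :=
  (Num.sqrt t)^-1 * expR (y ^+ 2 / (2 * t)).

Definition dphiNH (R : realType) (y t : R) : R :=
  derive1 (fun z => phiNH z t) y.

Definition PhiNH (R : realType) (N : nat) (x : 'I_N -> R) (t : R) : R :=
  \sum_(i < N) phiNH (x i) t.

Definition in_simplex (R : realType) (N : nat) (p : 'I_N -> R) : Prop :=
  (forall i, 0 <= p i) /\ \sum_(i < N) p i = 1.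

(* Main.v *)
Require Import Defs.
From HB Require Import structures.
From mathcomp Require Import all_boot all_order all_algebra.
From mathcomp Require Import all_classical all_reals all_analysis.
From mathcomp.algebra_tactics Require Import ring lra.
Import Order.TTheory GRing.Theory Num.Theory.
Local Open Scope ring_scope.

Lemma dphiE (R : realType) (y t : R) : 0 < t -> dphiNH y t = y / t * phiNH y t.
Proof.
move=> t0.
rewrite /dphiNH /phiNH.
rewrite derive1Ml; last first.
  apply/(derivable1_diffP (expR \o (fun z : R => z ^+ 2 / (2 * t)))).
  apply: differentiable_comp.
    apply/derivable1_diffP.
    apply: derivableM => //.
  exact: (proj1 (derivable1_diffP expR _) (@derivable_expR R _)).
have -> : (fun x : R => expR (x ^+ 2 / (2 * t)))^`()%classic y = expR (y ^+ 2 / (2 * t)) * (y / t).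
  rewrite -[fun x : R => _]/(expR \o (fun z : R => z ^+ 2 / (2 * t))).
  rewrite derive1_comp; last 2 first.
  - by apply: derivableM => //.
  - exact: (@derivable_expR R _).
  rewrite derive1Mr; last exact: exprn_derivable.
  rewrite exp_derive1 /= derive1E derive_val expr1; congr (_ * _).
  have tn : t != 0 by rewrite gt_eqF.
  rewrite scaler_nat -mulr_natl; field.
  by [].
ring.
Qed.

Lemma key (R : realType) (y dl B t d : R) : 0 <= y -> 0 < t ->
  dl ^+ 2 <= B ^+ 2 -> 4 * B ^+ 2 <= d -> dl ^+ 2 < d ->
  16 * (y ^+ 2 * B ^+ 2) <= t ^+ 2 ->
  phiNH (y + dl) (t + d) < phiNH y t * (1 + y * dl / (t + d)).
Proof.
move=> y0 t0 dB dB4 dd yB.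
have d0 : 0 < d by apply: le_lt_trans dd; exact: sqr_ge0.
set t' := t + d.
have t'0 : 0 < t' by rewrite /t'; lra.
have tn : t != 0 by rewrite gt_eqF.
have t'n : t' != 0 by rewrite gt_eqF.
set v := y * dl / t'.
have hv : - (1/4) <= v.
  have h1 : (y * dl) ^+ 2 <= t' ^+ 2 / 16.
    have : (y * dl) ^+ 2 <= y ^+ 2 * B ^+ 2 by rewrite exprMn ler_wpM2l // sqr_ge0.
    have : t ^+ 2 <= t' ^+ 2 by rewrite /t'; nra.
    lra.
  have h2 : - (t' / 4) <= y * dl by nra.
  rewrite /v ler_pdivlMr //; lra.
have hb : expR (v - 2 * v ^+ 2) <= 1 + v.
  have := expR_ge1Dx (- (v - 2 * v ^+ 2)).
  rewrite expRN => h.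
  have e0 := expR_gt0 (v - 2 * v ^+ 2).
  have p0 : 0 < 1 + - (v - 2 * v ^+ 2) by nra.
  have h' := ler_wpM2l (ltW e0) h.
  rewrite mulfV ?gt_eqF // in h'.
  rewrite -(ler_pM2r p0).
  have : 1 <= (1 + v) * (1 + - (v - 2 * v ^+ 2)) by nra.
  lra.
have hc : expR (d / t') <= t' / t.
  have := expR_ge1Dx (- (d / t')).
  rewrite expRN => h.
  have e0 := expR_gt0 (d / t').
  have p0 : 1 + - (d / t') = t / t' by rewrite /t'; field.
  rewrite p0 in h.
  have h' := ler_wpM2l (ltW e0) h.
  rewrite mulfV ?gt_eqF // in h'.
  rewrite ler_pdivlMr //.
  have -> : expR (d / t') * t = expR (d / t') * (t / t') * t' by field.
  move: h'; set z := expR (d / t') * (t / t'); nra.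
set a := expR (d / (2 * t')).
have a0 : 0 < a := expR_gt0 _.
have st0 : 0 < Num.sqrt t by rewrite sqrtr_gt0.
have st'0 : 0 < Num.sqrt t' by rewrite sqrtr_gt0.
have hd : a * Num.sqrt t <= Num.sqrt t'.
  have a2 : a ^+ 2 = expR (d / t').
    by rewrite expr2 /a -expRD; congr expR; field.
  have : (a * Num.sqrt t) ^+ 2 <= Num.sqrt t' ^+ 2.
    rewrite exprMn !sqr_sqrtr; [|exact: ltW|exact: ltW].
    by rewrite a2 -ler_pdivlMr.
  set p := a * Num.sqrt t; have : 0 < p by rewrite mulr_gt0.
  nra.
set E := expR (y ^+ 2 / (2 * t)).
have E0 : 0 < E := expR_gt0 _.
have he : (y + dl) ^+ 2 / (2 * t') < y ^+ 2 / (2 * t) + (v - 2 * v ^+ 2 + d / (2 * t')).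
  rewrite -subr_lt0.
  have -> : (y + dl) ^+ 2 / (2 * t') - (y ^+ 2 / (2 * t) + (v - 2 * v ^+ 2 + d / (2 * t'))) =
    (dl ^+ 2 * t * t' + 4 * y ^+ 2 * dl ^+ 2 * t - d * t * t' - y ^+ 2 * d * t') / (2 * t * t' ^+ 2).
    rewrite /v /t'; field.
    by rewrite -/t' t'n tn.
  rewrite pmulr_llt0; last by rewrite invr_gt0 !mulr_gt0 // exprn_gt0.
  have h1 : dl ^+ 2 * t * t' < d * t * t' by have := mulr_gt0 t0 t'0; nra.
  have h2 : 4 * y ^+ 2 * dl ^+ 2 * t <= y ^+ 2 * d * t'.
    have : 4 * y ^+ 2 * dl ^+ 2 <= y ^+ 2 * d.
      have : 4 * dl ^+ 2 <= d by lra.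
      have := sqr_ge0 y; nra.
    have := sqr_ge0 y; rewrite /t'; nra.
  lra.
have hX : expR ((y + dl) ^+ 2 / (2 * t')) < E * (1 + v) * a.
  apply: (lt_le_trans (y := E * expR (v - 2 * v ^+ 2) * a)).
    by rewrite /E /a -!expRD ltr_expR -addrA.
  rewrite ler_pM2r // ler_pM2l //.
rewrite /phiNH -/t' -/E -/v.
set X := expR ((y + dl) ^+ 2 / (2 * t')).
have X0 : 0 < X := expR_gt0 _.
have v1 : 0 < 1 + v by lra.
set st := Num.sqrt t in st0 hd *.
set st' := Num.sqrt t' in st'0 hd *.
have P0 : 0 < E * (1 + v) by rewrite mulr_gt0.
set P := E * (1 + v) in P0 hX *.
have h1 : X * st < P * st'.
  apply: (lt_le_trans (y := P * a * st)); first by rewrite ltr_pM2r.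
  by rewrite -mulrA ler_pM2l.
rewrite -mulrA -/P (mulrC st'^-1) (mulrC st^-1) ltr_pdivrMr // mulrAC ltr_pdivlMr //.
Qed.

Theorem lemma6p12 (R : realType) (N : nat) (B K t dt : R)
    (x p l : 'I_N -> R) :
  0 < B ->
  (forall i, 0 <= x i) ->
  0 < t ->
  in_simplex p ->
  ((exists i, dphiNH (x i) t != 0) ->
     forall i, p i = dphiNH (x i) t / \sum_(j < N) dphiNH (x j) t) ->
  (forall i i', `|l i - l i'| <= B) ->
  0 <= dt ->
  PhiNH (fun i => x i + ((\sum_(j < N) p j * l j) - l i)) (t + dt)
    = PhiNH x t ->
  0 < K ->
  (forall i, x i ^+ 2 / t <= K) ->
  256 * expR 1 ^+ 2 * B ^+ 2 * Num.max K 1 <= t ->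
  dt <= 2 * expR 1 * B ^+ 2.
Proof.
move=> B0 x0 t0 [p0 p1] hp hl dt0 hPhi K0 hK ht.
rewrite leNgt; apply/negP => hdt.
have e2 : 2 <= expR 1 :> R by have := expR_ge1Dx (1 : R); lra.
have [i0 _] : exists i0 : 'I_N, true.
  case: (pickP (fun _ : 'I_N => true)) => [i _|h]; first by exists i.
  by move: p1; rewrite big_pred0 // => /eqP; rewrite eq_sym oner_eq0.
set m := \sum_(j < N) p j * l j.
set dl := fun i => m - l i.
have hdl : forall i, dl i ^+ 2 <= B ^+ 2.
  move=> i.
  have : `|dl i| <= B.
    have -> : dl i = \sum_(j < N) p j * (l j - l i).
      rewrite /dl /m.
      under [in RHS]eq_bigr => j _ do rewrite mulrBr.
      by rewrite sumrB -mulr_suml p1 mul1r.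
    apply: (le_trans (ler_norm_sum _ _ _)).
    apply: (le_trans (y := \sum_(j < N) p j * B)); last by rewrite -mulr_suml p1 mul1r.
    apply: ler_sum => j _.
    by rewrite normrM ger0_norm // ler_wpM2l.
  rewrite ler_norml => /andP [h1 h2].
  nra.
have hc : \sum_(i < N) dphiNH (x i) t * dl i = 0.
  have [[j hj]|hno] := pselect (exists i, dphiNH (x i) t != 0).
    have hp' := hp (ex_intro _ j hj).
    set S := \sum_(j < N) dphiNH (x j) t in hp'.
    have S0 : S != 0.
      apply/negP => /eqP S0.
      move: p1; under eq_bigr => i _ do rewrite hp' S0 invr0 mulr0.
      by rewrite big1 // => /eqP; rewrite eq_sym oner_eq0.
    rewrite /dl.
    under eq_bigr => i _ do rewrite mulrBr.
    rewrite sumrB -mulr_suml -/S /m.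
    under [X in S * X]eq_bigr => i _ do rewrite hp' mulrAC.
    by rewrite -mulr_suml mulrC divfK // subrr.
  rewrite big1 // => i _.
  have : ~ (dphiNH (x i) t != 0) by move=> h; apply: hno; exists i.
  by move/negP; rewrite negbK => /eqP ->; rewrite mul0r.
have hc' : \sum_(i < N) phiNH (x i) t * (x i * dl i / (t + dt)) = 0.
  transitivity (\sum_(i < N) dphiNH (x i) t * dl i * (t / (t + dt))).
    apply: eq_bigr => i _; rewrite dphiE //.
    have tn : t != 0 by rewrite gt_eqF.
    have tdn : t + dt != 0 by rewrite gt_eqF //; lra.
    move: (phiNH (x i) t) (dl i) (x i) => P D X; field.
    by rewrite tdn tn.
  by rewrite -mulr_suml hc mul0r.
move: hPhi; apply/eqP; rewrite lt_eqF //.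
rewrite /PhiNH.
apply: (lt_le_trans (y := \sum_(i < N) phiNH (x i) t * (1 + x i * dl i / (t + dt)))).
  apply: ltr_sum; first by apply/hasP; exists i0; rewrite ?mem_index_enum.
  move=> i _.
  apply: key.
  - exact: x0.
  - exact: t0.
  - exact: hdl.
  - have hB2 : 0 < B ^+ 2 by rewrite exprn_gt0.
    have : 0 <= (expR 1 - 2) * B ^+ 2 by rewrite mulr_ge0 ?subr_ge0 // ltW.
    move: (expR 1) e2 hdt => E1 e2' hdt' h.
    lra.
  - have hB2 : 0 < B ^+ 2 by rewrite exprn_gt0.
    have : 0 <= (expR 1 - 2) * B ^+ 2 by rewrite mulr_ge0 ?subr_ge0 // ltW.
    move: (expR 1) e2 hdt => E1 e2' hdt' h.
    have := hdl i; rewrite /dl /m /=; lra.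
  - have := hK i; rewrite ler_pdivrMr // => hKi.
    have hmax : K <= Num.max K 1 by rewrite le_max lexx.
    have hB2 : 0 <= B ^+ 2 := sqr_ge0 B.
    have he : 1 <= expR 1 ^+ 2 :> R by rewrite exprn_ege1 //; lra.
    move: (expR 1 ^+ 2) he ht => E2 he ht.
    set M := Num.max K 1 in hmax ht.
    have h1 : B ^+ 2 * M <= E2 * B ^+ 2 * M.
      have : 0 <= B ^+ 2 * M by rewrite mulr_ge0 //; lra.
      nra.
    have h2 : B ^+ 2 * K <= B ^+ 2 * M by rewrite ler_wpM2l.
    have h3 : 16 * K * B ^+ 2 <= t by lra.
    have h4 : 16 * (x i ^+ 2 * B ^+ 2) <= 16 * (K * t * B ^+ 2).
      by rewrite ler_pM2l // ler_wpM2r.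
    have h5 : 16 * (K * t * B ^+ 2) <= t ^+ 2.
      have -> : 16 * (K * t * B ^+ 2) = (16 * K * B ^+ 2) * t by ring.
      by rewrite expr2 ler_wpM2r // ltW.
    lra.
under eq_bigr => i _ do rewrite mulrDr mulr1.
by rewrite big_split /= hc' addr0.
Qed.
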